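(* For any two stationary policies $\pi,\pi'$, $$\mathrm{KL}(\mu^\pi\|\mu^{\pi'})\le\frac1{1-\gamma}\mathcal H(\pi\|\pi').$$
   Context: Discounted MDP with finite state space $\mathcal X$, finite action space $\mathcal A$, transition kernel $P$, discount factor $\gamma\in(0,1)$ and initial distribution $\nu_0$. For a stationary policy $\pi$, $\nu^\pi(x)=(1-\gamma)\sum_{t\ge0}\gamma^t\mathbb P_\pi[X_t=x]$ (trajectory started at $X_0\sim\nu_0$, following $\pi$), $\mu^\pi(x,a)=\nu^\pi(x)\pi(a|x)$, and $\mathcal H(\pi\|\pi')=\sum_x\nu^\pi(x)\mathrm{KL}(\pi(\cdot|x)\|\pi'(\cdot|x))$. *)

(* Defs.v *)
From HB Require Import structures.
From mathcomp Require Import all_boot all_order all_algebra.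
From mathcomp Require Import all_classical all_reals all_analysis.
Set Implicit Arguments. Unset Strict Implicit. Unset Printing Implicit Defensive.
Import Order.TTheory GRing.Theory Num.Theory.
Import numFieldNormedType.Exports.
Local Open Scope ring_scope.

Section MDP.
Variable R : realType.

Definition is_dist (T : finType) (p : T -> R) : Prop :=
  (forall x, 0 <= p x) /\ \sum_(x : T) p x = 1.

Variables (X A : finType).

Fixpoint state_law (nu0 : X -> R) (P : X -> A -> X -> R) (pi : X -> A -> R)
    (t : nat) : X -> R :=
  match t with
  | 0%N => nu0
  | t'.+1 => fun y => \sum_(x : X) state_law nu0 P pi t' x *
                       \sum_(a : A) pi x a * P x a y
  end.

Definition state_occ (gamma : R) (nu0 : X -> R) (P : X -> A -> X -> R)
    (pi : X -> A -> R) (x : X) : R :=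
  (1 - gamma) * limn (series ((fun t => gamma ^+ t * state_law nu0 P pi t x) : R ^nat)).

Definition sa_occ (gamma : R) (nu0 : X -> R) (P : X -> A -> X -> R)
    (pi : X -> A -> R) (xa : X * A) : R :=
  state_occ gamma nu0 P pi xa.1 * pi xa.1 xa.2.

End MDP.

Local Open Scope ereal_scope.

Definition kl_term (R : realType) (p q : R) : \bar R :=
  if p == 0%R then 0
  else if q == 0%R then +oo
  else (p * ln (p / q))%:E.

Definition KL (R : realType) (T : finType) (p q : T -> R) : \bar R :=
  \sum_(x : T) kl_term (p x) (q x).

Definition cond_rel_ent (R : realType) (X A : finType) (gamma : R) (nu0 : X -> R)
    (P : X -> A -> X -> R) (pi pi' : X -> A -> R) : \bar R :=
  \sum_(x : X) (state_occ gamma nu0 P pi x)%:E * KL (pi x) (pi' x).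

(* Main.v *)
Require Import Defs.
From HB Require Import structures.
From mathcomp Require Import all_boot all_order all_algebra.
From mathcomp Require Import all_classical all_reals all_analysis.
From mathcomp Require Import ring lra.
Import Order.TTheory GRing.Theory Num.Theory.
Import numFieldNormedType.Exports.
Local Open Scope ring_scope.

Set Implicit Arguments. Unset Strict Implicit. Unset Printing Implicit Defensive.
Local Open Scope classical_set_scope.


Lemma cvg_bigsum (R : realType) (I : Type) (r : seq I) (f : I -> nat -> R) (l : I -> R) :
  (forall i, f i n @[n --> \oo] --> l i) ->
  (\sum_(i <- r) f i n) @[n --> \oo] --> \sum_(i <- r) l i.
Proof.
move=> H; elim: r => [|i r IH].
  under eq_fun do rewrite big_nil. rewrite big_nil; exact: cvg_cst.
under eq_fun do rewrite big_cons. rewrite big_cons.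
exact: cvgD.
Qed.

Section Occ.
Variables (R : realType) (X A : finType) (P : X -> A -> X -> R) (gamma : R)
  (nu0 : X -> R) (pi : X -> A -> R).
Hypotheses (HP : forall x a, is_dist (P x a)) (Hg : 0 < gamma < 1)
  (Hnu0 : is_dist nu0) (Hpi : forall x, is_dist (pi x)).

Definition cc x y := \sum_(a : A) pi x a * P x a y.

Lemma cc_ge0 x y : 0 <= cc x y.
Proof. apply: sumr_ge0 => a _; apply: mulr_ge0; [exact: (Hpi x).1|exact: (HP x a).1]. Qed.

Lemma cc_sum x : \sum_y cc x y = 1.
Proof.
rewrite /cc exchange_big /= -(Hpi x).2; apply: eq_bigr => a _.
by rewrite -mulr_sumr (HP x a).2 mulr1.
Qed.

Lemma law_ge0 t y : 0 <= state_law nu0 P pi t y.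
Proof.
elim: t y => [|t IH] y /=; first exact: Hnu0.1.
apply: sumr_ge0 => x _; apply: mulr_ge0 => //; exact: cc_ge0.
Qed.

Lemma law_sum t : \sum_y state_law nu0 P pi t y = 1.
Proof.
elim: t => [|t IH] /=; first exact: Hnu0.2.
rewrite exchange_big /= -IH; apply: eq_bigr => x _.
by rewrite -mulr_sumr -/(cc x _) (eq_bigr _ (fun y _ => erefl (cc x y))) cc_sum mulr1.
Qed.

Lemma law_le1 t y : state_law nu0 P pi t y <= 1.
Proof.
rewrite -(law_sum t) (bigD1 y) //= lerDl; apply: sumr_ge0 => z _; exact: law_ge0.
Qed.

Definition uu y : R ^nat := fun t => gamma ^+ t * state_law nu0 P pi t y.

Lemma uu_cvg y : cvgn (series (uu y)).
Proof.
have [g0 g1] := andP Hg.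
apply: (@series_le_cvg _ _ (geometric 1 gamma)).
- move=> n; apply: mulr_ge0; [exact: exprn_ge0 (ltW g0)|exact: law_ge0].
- move=> n; rewrite /geometric /= mul1r; exact: exprn_ge0 (ltW g0).
- move=> n; rewrite /uu /geometric /= mul1r.
  apply: ler_piMr; [exact: exprn_ge0 (ltW g0)|exact: law_le1].
- apply: is_cvg_geometric_series; rewrite ger0_norm //; exact: ltW.
Qed.

Definition SS y := limn (series (uu y)).

Lemma SS_ge0 y : 0 <= SS y.
Proof.
apply: limr_ge; first exact: uu_cvg.
apply: filterE => n; rewrite /series /=; apply: sumr_ge0 => t _.
apply: mulr_ge0; [exact: exprn_ge0 (ltW (andP Hg).1)|exact: law_ge0].
Qed.

Lemma series_step y n :
  series (uu y) n.+1 = nu0 y + gamma * \sum_x series (uu x) n * cc x y.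
Proof.
rewrite /series /= big_nat_recl //= /uu expr0 mul1r; congr (_ + _).
rewrite mulr_sumr; under [RHS]eq_bigr do rewrite mulr_suml mulr_sumr.
rewrite [RHS]exchange_big /=; apply: eq_bigr => t _ /=.
rewrite mulr_sumr; apply: eq_bigr => x _; rewrite /cc exprS.
by rewrite !mulrA [gamma * _]mulrC.
Qed.

Lemma SS_flow y : SS y = nu0 y + gamma * \sum_x SS x * cc x y.
Proof.
apply: norm_cvg_lim.
rewrite -cvg_shiftS /=.
under eq_fun do rewrite series_step.
apply: cvgD; first exact: cvg_cst.
apply: cvgM; first exact: cvg_cst.
apply: cvg_bigsum => x; apply: cvgM; last exact: cvg_cst.
exact: uu_cvg.
Qed.

Lemma occ_flow y : state_occ gamma nu0 P pi y =
  (1 - gamma) * nu0 y + gamma * \sum_x state_occ gamma nu0 P pi x * cc x y.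
Proof.
rewrite /state_occ -/(SS y) SS_flow mulrDr; congr (_ + _).
have -> : forall a b c : R, a * (b * c) = b * (a * c) by move=> *; ring.
congr (_ * _); rewrite mulr_sumr; apply: eq_bigr => x _.
by rewrite /SS mulrA.
Qed.

Lemma occ_ge0 y : 0 <= state_occ gamma nu0 P pi y.
Proof.
apply: mulr_ge0; last exact: SS_ge0.
by rewrite subr_ge0 ltW // (andP Hg).2.
Qed.

End Occ.


Section KLR.
Variable R : realType.

Definition klr (p q : R) : R := if p == 0 then 0 else p * ln (p / q).

Lemma klr_term (p q c : R) : 0 <= p -> 0 <= q -> (p != 0 -> 0 < q) -> 0 < c ->
  p * ln c + p - q * c <= klr p q.
Proof.
move=> p0 q0 pq c0; rewrite /klr.
have [->|pn0] := eqVneq p 0.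
  rewrite mul0r !add0r oppr_le0; exact: mulr_ge0 (ltW c0).
have pp : 0 < p by rewrite lt_neqAle eq_sym pn0.
have qp := pq pn0.
set z := q * c / p.
have zp : 0 < z by rewrite /z divr_gt0 // mulr_gt0.
have H1 : ln z <= z - 1.
  have := @le_ln1Dx R (z - 1); rewrite addrCA subrr addr0; apply; lra.
have Hz : ln z = ln q + ln c - ln p.
  by rewrite /z ln_div ?lnM // posrE ?mulr_gt0.
have Hpq : ln (p / q) = ln p - ln q by rewrite ln_div.
have Hpz : p * z = q * c by rewrite /z mulrC divfK.
rewrite Hz in H1; rewrite Hpq.
have H2 := ler_wpM2l (ltW pp) H1.
have H3 : p * (z - 1) = q * c - p by rewrite mulrBr mulr1 Hpz.
rewrite H3 in H2.
nra.
Qed.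

Lemma logsum2 (I : finType) (a b : R) (p q : I -> R) :
  0 <= a -> 0 <= b -> (a != 0 -> 0 < b) ->
  (forall i, 0 <= p i) -> (forall i, 0 <= q i) -> (forall i, p i != 0 -> 0 < q i) ->
  klr (a + \sum_i p i) (b + \sum_i q i) <= klr a b + \sum_i klr (p i) (q i).
Proof.
move=> a0 b0 ab p0 q0 pq.
set Pt := a + \sum_i p i; set Qt := b + \sum_i q i.
have Pt0 : 0 <= Pt by rewrite /Pt addr_ge0 // sumr_ge0.
have Qt0 : 0 <= Qt by rewrite /Qt addr_ge0 // sumr_ge0.
have [PtE|Ptn0] := eqVneq Pt 0.
  have [a0' s0] : a = 0 /\ \sum_i p i = 0.
    move: PtE; rewrite /Pt => /eqP; rewrite paddr_eq0 ?sumr_ge0 //.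
    by case/andP => /eqP -> /eqP ->.
  have pi0 : forall i, p i = 0.
    by move=> i; apply: (psumr_eq0P _ s0) => // j _.
  rewrite PtE /klr eqxx a0' eqxx add0r big1 // => i _; by rewrite pi0 eqxx.
have Qtp : 0 < Qt.
  have : a != 0 \/ exists i, p i != 0.
    case: (eqVneq a 0) => [a00|]; last by left.
    right; apply/existsP; apply: contraNT Ptn0; rewrite negb_exists => /forallP H.
    rewrite /Pt a00 add0r big1 // => i _; exact/eqP/negbNE/H.
  case=> [an0|[i pin0]].
    by apply: (lt_le_trans (ab an0)); rewrite /Qt lerDl sumr_ge0.
  apply: (lt_le_trans (pq i pin0)); rewrite /Qt (bigD1 i) //= addrCA lerDl; apply: addr_ge0 => //.
  exact: sumr_ge0.
have Ptp : 0 < Pt by rewrite lt_neqAle eq_sym Ptn0.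
set c := Pt / Qt.
have cp : 0 < c by rewrite divr_gt0.
have Ha := @klr_term a b c a0 b0 ab cp.
have Hs : \sum_i (p i * ln c + p i - q i * c) <= \sum_i klr (p i) (q i).
  by apply: ler_sum => i _; apply: klr_term => //; apply: pq.
rewrite !big_split /= sumrN -!mulr_suml in Hs.
have -> : klr Pt Qt = Pt * ln c by rewrite /klr (negbTE Ptn0).
have HQ : Qt * c = Pt by rewrite /c mulrC divfK // gt_eqF.
rewrite /Pt /Qt in HQ *.
nra.
Qed.

Lemma klr_scale (c p q : R) : 0 <= c -> klr (c * p) (c * q) = c * klr p q.
Proof.
move=> c0; rewrite /klr.
have [->|cn0] := eqVneq c 0; first by rewrite !mul0r eqxx.
rewrite mulf_eq0 (negbTE cn0) /=.
case: eqP => _; first by rewrite mulr0.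
by rewrite invfM mulrACA divff // mul1r mulrA.
Qed.

Lemma klr_same (a : R) : klr a a = 0.
Proof. rewrite /klr; case: eqP => // /eqP an0; by rewrite divff // ln1 mulr0. Qed.

Lemma klr0 (q : R) : klr 0 q = 0.
Proof. by rewrite /klr eqxx. Qed.

End KLR.


Section Main.
Variables (R : realType) (X A : finType) (P : X -> A -> X -> R) (gamma : R)
  (nu0 : X -> R) (pi pi' : X -> A -> R).
Hypotheses (HP : forall x a, is_dist (P x a)) (Hg : 0 < gamma < 1)
  (Hnu0 : is_dist nu0) (Hpi : forall x, is_dist (pi x)) (Hpi' : forall x, is_dist (pi' x)).

Notation nu := (state_occ gamma nu0 P pi).
Notation nu' := (state_occ gamma nu0 P pi').

Lemma occ_support (Hfin : forall x a, nu x != 0 -> pi x a != 0 -> pi' x a != 0) y :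
  nu' y = 0 -> nu y = 0.
Proof.
have [g1 g2] := andP Hg.
have g1n : 0 < 1 - gamma by rewrite subr_gt0.
pose Z := [pred y | nu' y == 0].
have HZ0 : forall y, Z y -> nu0 y = 0 /\ forall x a, nu' x * (pi' x a * P x a y) = 0.
  move=> z /eqP; rewrite occ_flow // => /eqP.
  rewrite paddr_eq0; first last.
  - apply: mulr_ge0; first exact: ltW.
    apply: sumr_ge0 => x _; apply: mulr_ge0; [exact: occ_ge0|exact: cc_ge0].
  - by apply: mulr_ge0; [exact: ltW|exact: Hnu0.1].
  case/andP; rewrite mulf_eq0 (gt_eqF g1n) /= => /eqP -> .
  rewrite mulf_eq0 (gt_eqF g1) /= => /eqP H; split=> // x a.
  have := psumr_eq0P (fun x _ => mulr_ge0 (occ_ge0 HP Hg Hnu0 Hpi' x) (cc_ge0 HP Hpi' x z)) H (i:=x) isT.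
  rewrite /cc mulr_sumr => H2.
  apply: (psumr_eq0P _ H2) => // b _.
  apply: mulr_ge0; [exact: occ_ge0|apply: mulr_ge0; [exact: (Hpi' _).1|exact: (HP _ _).1]].
have Hout : forall z x, Z z -> ~~ Z x -> nu x * cc P pi x z = 0.
  move=> z x Zz Zx; rewrite /cc mulr_sumr big1 // => a _.
  have [->|nxn0] := eqVneq (nu x) 0; first by rewrite mul0r.
  have [->|pan0] := eqVneq (pi x a) 0; first by rewrite mul0r mulr0.
  have Zx' : nu' x != 0 := Zx.
  have := (HZ0 z Zz).2 x a; move/eqP; rewrite mulf_eq0 (negbTE Zx') /=.
  rewrite mulf_eq0 (negbTE (Hfin _ _ nxn0 pan0)) /=.
  by move/eqP ->; rewrite !mulr0.
pose s := \sum_(z | Z z) nu z.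
have s0 : 0 <= s by apply: sumr_ge0 => z _; exact: occ_ge0.
have hs : s <= gamma * s.
  have Es : s = gamma * \sum_(z | Z z) \sum_(x | Z x) nu x * cc P pi x z.
    rewrite /s mulr_sumr; apply: eq_bigr => z Zz.
    rewrite occ_flow // (HZ0 z Zz).1 mulr0 add0r; congr (_ * _).
    rewrite (bigID Z) /= [X in _ + X]big1 ?addr0 // => x Zx; exact: Hout.
  rewrite {1}Es; apply: ler_wpM2l; first exact: ltW.
  rewrite exchange_big /=; apply: ler_sum => x Zx.
  rewrite -mulr_sumr; apply: ler_piMr; first exact: occ_ge0.
  rewrite -(cc_sum HP Hpi x) [X in _ <= X](bigID Z) /= lerDl.
  by apply: sumr_ge0 => z _; exact: cc_ge0.
have sE : s = 0 by apply/eqP; rewrite eq_le s0 andbT; nra.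
move=> Zy; apply: (psumr_eq0P _ sE) => [z _|]; first exact: occ_ge0.
by rewrite /= Zy.
Qed.

Hypothesis AC : forall x a, nu x * pi x a != 0 -> nu' x * pi' x a != 0.

Lemma chain_rule :
  \sum_(xa : X * A) klr (sa_occ gamma nu0 P pi xa) (sa_occ gamma nu0 P pi' xa) =
  \sum_y klr (nu y) (nu' y) + \sum_x nu x * \sum_a klr (pi x a) (pi' x a).
Proof.
rewrite -(pair_bigA _ (fun x a => klr (sa_occ gamma nu0 P pi (x, a))
   (sa_occ gamma nu0 P pi' (x, a)))) /= -big_split /=.
apply: eq_bigr => x _; rewrite /sa_occ /=.
have [nx0|nxn0] := eqVneq (nu x) 0.
  rewrite nx0 mul0r klr0 add0r big1 // => a _; by rewrite mul0r klr0.
have [a0 pa0] : exists a, pi x a != 0.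
  apply/existsP; apply: contraT; rewrite negb_exists => /forallP H.
  have : \sum_a pi x a = 0 by apply: big1 => a _; exact/eqP/negbNE/H.
  by rewrite (Hpi x).2 => /eqP; rewrite oner_eq0.
have nx'n0 : nu' x != 0.
  have := AC (mulf_neq0 nxn0 pa0); by rewrite mulf_eq0 negb_or => /andP[].
have nxp : 0 < nu x by rewrite lt_neqAle eq_sym nxn0 occ_ge0.
have nx'p : 0 < nu' x by rewrite lt_neqAle eq_sym nx'n0 occ_ge0.
have -> : klr (nu x) (nu' x) = \sum_a pi x a * (nu x * ln (nu x / nu' x)).
  by rewrite -mulr_suml (Hpi x).2 mul1r /klr (negbTE nxn0).
rewrite mulr_sumr -big_split /=; apply: eq_bigr => a _.
have [pa|pan0] := eqVneq (pi x a) 0.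
  by rewrite pa mulr0 klr0 mul0r klr0 mulr0 addr0.
have pa'n0 : pi' x a != 0.
  have := AC (mulf_neq0 nxn0 pan0); by rewrite mulf_eq0 negb_or => /andP[].
have pap : 0 < pi x a by rewrite lt_neqAle eq_sym pan0 (Hpi x).1.
have pa'p : 0 < pi' x a by rewrite lt_neqAle eq_sym pa'n0 (Hpi' x).1.
rewrite /klr mulf_eq0 (negbTE nxn0) (negbTE pan0) /= -mulf_div.
rewrite (@lnM _ (nu x / nu' x) (pi x a / pi' x a)) ?posrE ?divr_gt0 //.
ring.
Qed.


Lemma flow_pair (rho : X -> A -> R) (Hrho : forall x, is_dist (rho x)) y :
  state_occ gamma nu0 P rho y = (1 - gamma) * nu0 y +
  \sum_(xa : X * A) (gamma * P xa.1 xa.2 y) * sa_occ gamma nu0 P rho xa.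
Proof.
rewrite occ_flow //; congr (_ + _).
rewrite -(pair_bigA _ (fun x a => (gamma * P x a y) * sa_occ gamma nu0 P rho (x, a))) /=.
rewrite mulr_sumr; apply: eq_bigr => x _; rewrite /cc mulr_sumr mulr_sumr.
apply: eq_bigr => a _; rewrite /sa_occ /=; ring.
Qed.

Lemma g0 : 0 <= gamma. Proof. by case/andP: Hg => /ltW. Qed.

Lemma sa_ge0 rho (Hrho : forall x, is_dist (rho x)) xa : 0 <= sa_occ gamma nu0 P rho xa.
Proof. apply: mulr_ge0; [exact: occ_ge0|exact: (Hrho _).1]. Qed.

Lemma step_y y :
  klr (nu y) (nu' y) <= \sum_(xa : X * A) (gamma * P xa.1 xa.2 y) *
     klr (sa_occ gamma nu0 P pi xa) (sa_occ gamma nu0 P pi' xa).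
Proof.
rewrite (flow_pair Hpi) (flow_pair Hpi').
have a0 : 0 <= (1 - gamma) * nu0 y.
  by apply: mulr_ge0; [rewrite subr_ge0 ltW // (andP Hg).2|exact: Hnu0.1].
apply: le_trans (logsum2 _ _ _ _ _ _) _.
- exact: a0.
- exact: a0.
- by move=> h; rewrite lt_neqAle eq_sym h.
- move=> xa; apply: mulr_ge0; [apply: mulr_ge0; [exact: g0|exact: (HP _ _).1]|exact: sa_ge0].
- move=> xa; apply: mulr_ge0; [apply: mulr_ge0; [exact: g0|exact: (HP _ _).1]|exact: sa_ge0].
- move=> [x a] /=; rewrite mulf_eq0 negb_or => /andP[h1 h2].
  rewrite lt_neqAle eq_sym mulf_neq0 //=; last exact: AC.
  apply: mulr_ge0; [apply: mulr_ge0; [exact: g0|exact: (HP _ _).1]|exact: sa_ge0].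
rewrite klr_same add0r; apply: ler_sum => xa _; rewrite klr_scale //.
apply: mulr_ge0; [exact: g0|exact: (HP _ _).1].
Qed.

Lemma main_real :
  \sum_(xa : X * A) klr (sa_occ gamma nu0 P pi xa) (sa_occ gamma nu0 P pi' xa) <=
  (1 - gamma)^-1 * \sum_x nu x * \sum_a klr (pi x a) (pi' x a).
Proof.
set Km := \sum_(xa : X * A) _; set Hr := \sum_x _.
set K := \sum_y klr (nu y) (nu' y).
have HC : Km = K + Hr by rewrite /Km chain_rule.
have HK : K <= gamma * Km.
  apply: le_trans (ler_sum _ (fun y _ => step_y y)) _.
  rewrite exchange_big /= /Km mulr_sumr; apply: ler_sum => xa _.
  by rewrite -mulr_suml -mulr_sumr (HP _ _).2 mulr1.
have [g1 g2] := andP Hg.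
clearbody Km K Hr.
have h1 : (1 - gamma) * Km <= Hr by nra.
have gn : 1 - gamma != 0 by rewrite subr_eq0 eq_sym lt_eqF.
rewrite -[Km](mulKf gn); apply: ler_wpM2l => //.
by rewrite invr_ge0 subr_ge0 ltW.
Qed.

End Main.


Lemma adde_nNy (R : realType) (x y : \bar R) :
  x != -oo%E -> y != -oo%E -> (x + y)%E != -oo%E.
Proof. by case: x => [x||] // ; case: y => [y||]. Qed.

Lemma sum_nNy (R : realType) (I : finType) (Q : pred I) (F : I -> \bar R) :
  (forall i, F i != -oo%E) -> (\sum_(i | Q i) F i)%E != -oo%E.
Proof.
move=> H; elim/big_ind: _ => //; exact: adde_nNy.
Qed.

Lemma kl_term_nNy (R : realType) (p q : R) : kl_term p q != -oo%E.
Proof. by rewrite /kl_term; case: ifP => _ //; case: ifP. Qed.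

Lemma KL_nNy (R : realType) (T : finType) (p q : T -> R) : KL p q != -oo%E.
Proof. apply: sum_nNy => i; exact: kl_term_nNy. Qed.

Lemma mule_nNy (R : realType) (c : R) (z : \bar R) :
  0 <= c -> z != -oo%E -> (c%:E * z)%E != -oo%E.
Proof.
move=> c0; case: z => [r| |] // _.
have [->|cn0] := eqVneq c 0; first by rewrite mul0e.
by rewrite gt0_muley // lte_fin lt_neqAle eq_sym cn0.
Qed.

Local Close Scope classical_set_scope.
Unset Implicit Arguments.

Theorem mainTheorem9 (R : realType) (X A : finType)
  (P : X -> A -> X -> R) (gamma : R) (nu0 : X -> R) (pi pi' : X -> A -> R) :
  (forall x a, is_dist (P x a)) ->
  0 < gamma < 1 ->
  is_dist nu0 ->
  (forall x, is_dist (pi x)) ->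
  (forall x, is_dist (pi' x)) ->
  (KL (sa_occ gamma nu0 P pi) (sa_occ gamma nu0 P pi')
   <= ((1 - gamma)^-1)%:E * cond_rel_ent gamma nu0 P pi pi')%E.
Proof.
move=> HP Hg Hnu0 Hpi Hpi'.
have [g1 g2] := andP Hg.
case: (pselect (exists x a, state_occ gamma nu0 P pi x != 0 /\ pi x a != 0 /\ pi' x a == 0)).
  move=> [x [a [h1 [h2 h3]]]].
  have nxp : 0 < state_occ gamma nu0 P pi x.
    by rewrite lt_neqAle eq_sym h1 (occ_ge0 HP Hg Hnu0 Hpi).
  have KLx : KL (pi x) (pi' x) = +oo%E.
    rewrite /KL (bigD1 a) //= /kl_term (negbTE h2) h3 addye //.
    apply: sum_nNy => b; exact: kl_term_nNy.
  have -> : cond_rel_ent gamma nu0 P pi pi' = +oo%E.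
    rewrite /cond_rel_ent (bigD1 x) //= KLx gt0_muley ?lte_fin // addye //.
    apply: sum_nNy => z; apply: mule_nNy; first exact: (occ_ge0 HP Hg Hnu0 Hpi).
    exact: KL_nNy.
  rewrite gt0_muley ?leey // lte_fin invr_gt0 subr_gt0 //.
move=> Hno.
have Hfin : forall x a, state_occ gamma nu0 P pi x != 0 -> pi x a != 0 -> pi' x a != 0.
  move=> x a h1 h2; apply/eqP => h3; apply: Hno; exists x, a; rewrite h3 eqxx; by split.
have sup := occ_support HP Hg Hnu0 Hpi Hpi' Hfin.
have AC : forall x a, state_occ gamma nu0 P pi x * pi x a != 0 ->
    state_occ gamma nu0 P pi' x * pi' x a != 0.
  move=> x a; rewrite mulf_eq0 negb_or => /andP[h1 h2]; apply: mulf_neq0.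
    by apply/eqP => h; move/eqP: h1; apply; apply: sup.
  exact: Hfin.
have main := main_real HP Hg Hnu0 Hpi Hpi' AC.
have -> : KL (sa_occ gamma nu0 P pi) (sa_occ gamma nu0 P pi') =
  (\sum_(xa : X * A) klr (sa_occ gamma nu0 P pi xa) (sa_occ gamma nu0 P pi' xa))%:E.
  rewrite /KL -sumEFin; apply: eq_bigr => -[x a] _.
  rewrite /kl_term /klr; case: eqP => // /eqP hn0.
  by rewrite (negbTE (AC x a hn0)).
have -> : cond_rel_ent gamma nu0 P pi pi' =
  (\sum_x state_occ gamma nu0 P pi x * \sum_a klr (pi x a) (pi' x a))%:E.
  rewrite /cond_rel_ent -sumEFin; apply: eq_bigr => x _.
  have [->|nxn0] := eqVneq (state_occ gamma nu0 P pi x) 0; first by rewrite mul0e mul0r.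
  suff -> : KL (pi x) (pi' x) = (\sum_a klr (pi x a) (pi' x a))%:E by rewrite EFinM.
  rewrite /KL -sumEFin; apply: eq_bigr => a _.
  rewrite /kl_term /klr; case: eqP => // /eqP hn0.
  by rewrite (negbTE (Hfin x a nxn0 hn0)).
by rewrite -EFinM lee_fin.
Qed.
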